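(* If $G$ is a band, then $\chi(G)\le\lceil\frac54\omega(G)\rceil$.
   Context: Two disjoint sets $P,R$ form a graded pair if for any $p,p'\in P$, $N(p)\cap R\subseteq N(p')\cap R$ or $N(p')\cap R\subseteq N(p)\cap R$. A band is a graph whose vertex set is partitioned into seven sets $Q_1,\dots,Q_5,R_2,R_3$ such that: each is a clique; $Q_5$ is complete to $Q_1\cup Q_4$, $R_2$ is complete to $Q_1\cup Q_2\cup Q_3$, $R_3$ is complete to $Q_2\cup Q_3\cup Q_4$, $Q_2$ is complete to $Q_3$; $Q_1$ is anticomplete to $Q_3\cup R_3\cup Q_4$, $Q_4$ is anticomplete to $Q_1\cup Q_2\cup R_2$, $Q_5$ is anticomplete to $Q_2\cup R_2\cup Q_3\cup R_3$; and the pairs $\{Q_1,Q_2\}$, $\{Q_3,Q_4\}$, $\{R_2,R_3\}$ are graded. Complete/anticomplete: all edges / no edges between the sets. *)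

(* Defs.v *)
From mathcomp Require Import all_boot.
Set Implicit Arguments. Unset Strict Implicit. Unset Printing Implicit Defensive.

Section Graphs.
Variables (T : finType) (e : rel T).

Definition simple_graph : Prop := symmetric e /\ irreflexive e.

Definition is_clique (A : {set T}) : bool :=
  [forall x in A, forall y in A, (x != y) ==> e x y].

Definition complete_to (A B : {set T}) : bool :=
  [forall x in A, forall y in B, e x y].

Definition anticomplete_to (A B : {set T}) : bool :=
  [forall x in A, forall y in B, ~~ e x y].

Definition nbhd (p : T) : {set T} := [set y | e p y].

Definition graded_pair (P R : {set T}) : Prop :=
  [disjoint P & R] /\
  forall p p', p \in P -> p' \in P ->
    (nbhd p :&: R \subset nbhd p' :&: R) \/ (nbhd p' :&: R \subset nbhd p :&: R).

Definition band (Q1 Q2 Q3 Q4 Q5 R2 R3 : {set T}) : Prop :=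
  (let S := [:: Q1; Q2; Q3; Q4; Q5; R2; R3] in
   (forall i j, i < 7 -> j < 7 -> i != j ->
      [disjoint nth set0 S i & nth set0 S j]) /\
   Q1 :|: Q2 :|: Q3 :|: Q4 :|: Q5 :|: R2 :|: R3 = [set: T]) /\
  [/\ is_clique Q1, is_clique Q2, is_clique Q3, is_clique Q4 & is_clique Q5] /\
  (is_clique R2 /\ is_clique R3) /\
  [/\ complete_to Q5 (Q1 :|: Q4),
      complete_to R2 (Q1 :|: Q2 :|: Q3),
      complete_to R3 (Q2 :|: Q3 :|: Q4) &
      complete_to Q2 Q3] /\
  [/\ anticomplete_to Q1 (Q3 :|: R3 :|: Q4),
      anticomplete_to Q4 (Q1 :|: Q2 :|: R2) &
      anticomplete_to Q5 (Q2 :|: R2 :|: Q3 :|: R3)] /\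
  [/\ graded_pair Q1 Q2, graded_pair Q3 Q4 & graded_pair R2 R3].

Definition clique_number : nat :=
  \max_(A : {set T} | is_clique A) #|A|.

Definition colourable (k : nat) : bool :=
  [exists f : {ffun T -> 'I_k},
     [forall x, forall y, ((x != y) && e x y) ==> (f x != f y)]].

Lemma colourable_card : exists k, colourable k.
Proof.
exists #|T|; apply/existsP; exists [ffun x => enum_rank x].
apply/forallP => x; apply/forallP => y; apply/implyP => /andP[nxy _].
by rewrite !ffunE; apply: contra nxy => /eqP /enum_rank_inj ->.
Qed.

Definition chromatic_number : nat := ex_minn colourable_card.

End Graphs.

(* Main.v *)
Require Import Defs.
From mathcomp Require Import all_boot.
From mathcomp Require Import zify.
Set Implicit Arguments. Unset Strict Implicit. Unset Printing Implicit Defensive.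

Section Gen.
Variables (T : finType) (e : rel T).
Hypothesis esym : symmetric e.
Hypothesis eirr : irreflexive e.

Definition colorable_on (U : {set T}) (c : nat) :=
  exists f : T -> nat, (forall x, x \in U -> f x < c) /\
    (forall x y, x \in U -> y \in U -> e x y -> f x != f y).

Definition cbound (U : {set T}) (c : nat) :=
  forall C : {set T}, C \subset U -> is_clique e C -> #|C| <= c.

Definition nb (W : {set T}) (v : T) := [set y in W | e v y].

Lemma cliqueP (A : {set T}) :
  reflect (forall x y, x \in A -> y \in A -> x != y -> e x y) (is_clique e A).
Proof.
apply: (iffP forallP) => [H x y xA yA nxy | H x].
  by move/implyP: (H x) => /(_ xA) /forall_inP /(_ y yA) /implyP; apply.
apply/implyP=> xA; apply/forall_inP=> y yA; apply/implyP; exact: H.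
Qed.

Lemma clique_sub (A B : {set T}) : A \subset B -> is_clique e B -> is_clique e A.
Proof.
move=> /subsetP sAB /cliqueP H; apply/cliqueP=> x y xA yA; apply: H; exact: sAB.
Qed.

Lemma completeP (A B : {set T}) :
  reflect (forall x y, x \in A -> y \in B -> e x y) (complete_to e A B).
Proof.
apply: (iffP forall_inP) => [H x y xA yB | H x xA].
  by move/forall_inP: (H x xA) => /(_ y yB).
by apply/forall_inP=> y yB; apply: H.
Qed.

Lemma anticompleteP (A B : {set T}) :
  reflect (forall x y, x \in A -> y \in B -> ~~ e x y) (anticomplete_to e A B).
Proof.
apply: (iffP forall_inP) => [H x y xA yB | H x xA].
  by move/forall_inP: (H x xA) => /(_ y yB).
by apply/forall_inP=> y yB; apply: H.
Qed.

Lemma colorable_mono (U V : {set T}) c d : V \subset U -> c <= d -> colorable_on U c -> colorable_on V d.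
Proof.
move=> /subsetP sVU cd [f [Hb Hp]]; exists f; split.
  by move=> x /sVU /Hb /leq_trans; apply.
by move=> x y /sVU xU /sVU yU; apply: Hp.
Qed.

Lemma colorable_sum (U1 U2 : {set T}) c1 c2 :
  colorable_on U1 c1 -> colorable_on U2 c2 -> colorable_on (U1 :|: U2) (c1 + c2).
Proof.
move=> [f1 [b1 p1]] [f2 [b2 p2]].
exists (fun x => if x \in U1 then f1 x else c1 + f2 x); split.
  move=> x; case: ifP => [xU1 _|xU1].
    exact: leq_trans (b1 _ xU1) (leq_addr _ _).
  by case/setUP => [h|xU2]; [rewrite h in xU1|rewrite ltn_add2l; apply: b2].
have U2P : forall x, x \in U1 = false -> x \in U1 :|: U2 -> x \in U2.
  by move=> x h /setUP [h'|//]; rewrite h' in h.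
move=> x y; case: ifP => xU1; case: ifP => yU1.
- by move=> _ _; apply: p1.
- move=> _ /(U2P _ yU1) _ _; have := b1 _ xU1; rewrite neq_ltn => h.
  by rewrite (leq_trans h) ?leq_addr.
- move=> /(U2P _ xU1) _ _ _; have := b1 _ yU1; rewrite neq_ltn => h.
  by rewrite orbC (leq_trans h) ?leq_addr.
- move=> /(U2P _ xU1) xU2 /(U2P _ yU1) yU2 exy; rewrite eqn_add2l; exact: p2.
Qed.

Lemma colorable_anti (U1 U2 : {set T}) c :
  anticomplete_to e U1 U2 -> colorable_on U1 c -> colorable_on U2 c -> colorable_on (U1 :|: U2) c.
Proof.
move=> /anticompleteP hA [f1 [b1 p1]] [f2 [b2 p2]].
have U2P : forall x, x \in U1 = false -> x \in U1 :|: U2 -> x \in U2.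
  by move=> x h /setUP [h'|//]; rewrite h' in h.
exists (fun x => if x \in U1 then f1 x else f2 x); split.
  by move=> x; case: ifP => [/b1 //|xU1 /(U2P _ xU1) /b2].
move=> x y; case: ifP => xU1; case: ifP => yU1.
- by move=> _ _; apply: p1.
- by move=> _ /(U2P _ yU1) yU2 exy; move: (hA _ _ xU1 yU2); rewrite exy.
- by move=> /(U2P _ xU1) xU2 _ exy; move: (hA _ _ yU1 xU2); rewrite esym exy.
- by move=> /(U2P _ xU1) xU2 /(U2P _ yU1) yU2; apply: p2.
Qed.

Lemma colorable_card (Q : {set T}) : colorable_on Q #|Q|.
Proof.
exists (fun x => index x (enum Q)); split.
  by move=> x xQ; rewrite cardE index_mem mem_enum.
move=> x y xQ yQ exy; apply/negP => /eqP h.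
have : nth x (enum Q) (index x (enum Q)) = nth x (enum Q) (index y (enum Q)) by rewrite h.
rewrite !nth_index ?mem_enum // => exy'; by rewrite exy' eirr in exy.
Qed.

Lemma degen c (U : {set T}) :
  (forall W : {set T}, W \subset U -> W != set0 -> exists2 v, v \in W & #|nb W v| < c) ->
  colorable_on U c.
Proof.
move: {2}#|U| (leqnn #|U|) => n; elim: n U => [|n IH] U hn H.
  exists (fun _ => 0); split => x; move: hn; rewrite leqn0 => /eqP/cards0_eq -> ;
  by rewrite inE.
case: (eqVneq U set0) => [->|U0].
  by exists (fun _ => 0); split => x; rewrite inE.
have [v vU hv] := H U (subxx _) U0.
have [f [fb fp]] : colorable_on (U :\ v) c.
  apply: IH.
    by rewrite -ltnS (leq_trans _ hn) // (cardsD1 v U) vU.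
  by move=> W sW W0; apply: H W0; apply: subset_trans sW (subsetDl _ _).
clear IH; case: c hv H fb => [//|c] hv H fb.
pose h := fun y => (inord (f y) : 'I_c.+1).
have : #|h @: nb U v| < #|[set: 'I_c.+1]|.
  by rewrite cardsT card_ord (leq_ltn_trans (leq_imset_card _ _)).
move=> hlt.
have [i iN] : exists i, i \notin h @: nb U v.
  apply/existsP; rewrite -negb_forall; apply/negP => /forallP Hall.
  have : [set: 'I_c.+1] \subset h @: nb U v by apply/subsetP => i _; exact: Hall.
  by move/subset_leq_card; rewrite leqNgt hlt.
exists (fun x => if x == v then val i else f x); split.
  move=> x xU; case: (eqVneq x v) => [_|xv]; first exact: ltn_ord.
  by apply: fb; rewrite !inE xv.
have key : forall y, y \in U -> e v y -> val i != f y.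
  move=> y yU evy; apply/eqP => hi.
  have yv : y != v by apply: contraTneq evy => ->; rewrite eirr.
  have fy : f y < c.+1 by apply: fb; rewrite !inE yv.
  have hy : h y \in h @: nb U v by apply: imset_f; rewrite !inE yU evy.
  have ihy : i = h y by apply: val_inj; rewrite /h /= inordK.
  by rewrite -ihy (negbTE iN) in hy.
move=> x y xU yU exy; case: (eqVneq x v) => [xv|xv]; case: (eqVneq y v) => [yv|yv].
- by subst; rewrite eirr in exy.
- by subst; apply: key.
- by subst; rewrite eq_sym; apply: key => //; rewrite esym.
- by apply: fp => //; rewrite !inE ?xv ?yv.
Qed.

End Gen.

Section Top.
Variable X : finType.
Lemma top_set (S : {set X}) (g : X -> nat) n : n <= #|S| ->
  exists Tp : {set X}, [/\ Tp \subset S, #|Tp| = n &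
    forall t v, t \in Tp -> v \in S -> v \notin Tp -> g v <= g t].
Proof.
elim: n => [|n IH] hn.
  by exists set0; split; [exact: sub0set| exact: cards0| move=> t v; rewrite inE].
have [Tp [sT cT hT]] := IH (ltnW hn).
have : 0 < #|S :\: Tp| by rewrite cardsD (setIidPr sT) cT subn_gt0.
case/card_gt0P => i0 i0in.
case: (arg_maxnP g i0in) => m mIn mMax.
have [mT mS] : m \notin Tp /\ m \in S.
  have mIn' : m \in S :\: Tp by exact: mIn.
  by move: mIn'; rewrite !inE => /andP.
exists (m |: Tp); split.
- by rewrite subUset sub1set mS sT.
- by rewrite cardsU1 mT cT.
- move=> t v /setU1P [-> | tT] vS; rewrite in_setU1 negb_or => /andP [vm vT].
  + by apply: mMax; have : v \in S :\: Tp by rewrite inE vT vS.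
  + exact: hT.
Qed.

Lemma sub_card (S : {set X}) n : n <= #|S| -> exists2 B : {set X}, B \subset S & #|B| = n.
Proof. by move=> h; have [B [? ? _]] := top_set (fun _ => 0) h; exists B. Qed.
End Top.

Section CardH.
Variable X : finType.
Lemma cardD_sub (A B : {set X}) : B \subset A -> #|A :\: B| = #|A| - #|B|.
Proof. by move=> h; rewrite cardsD (setIidPr h). Qed.
Lemma card_sub_U (C A B : {set X}) : C \subset A :|: B -> #|C| <= #|A| + #|B|.
Proof. by move=> h; apply: leq_trans (subset_leq_card h) (leq_card_setU A B).1. Qed.
Lemma card_disjU (A B : {set X}) : A :&: B = set0 -> #|A :|: B| = #|A| + #|B|.
Proof. by move=> h; rewrite cardsU h cards0 subn0. Qed.
End CardH.

Lemma split2 n A B : n <= A + B -> exists u v, [/\ u <= A, v <= B & u + v = n].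
Proof. move=> h; exists (minn n A), (n - minn n A); split; lia. Qed.
Lemma numeric (w k z a b q2 q3 l r p s2 s3 : nat) :
  5 * w <= 4 * k -> w <= k ->
  a + z <= w -> b + z <= w -> a <= l -> l <= a + q2 -> b <= r -> r <= b + q3 ->
  l + p + s2 <= w -> r + p + s3 <= w -> q2 + q3 + p + s2 + s3 <= w ->
  exists wQ2 wQ3 pW s2W s3W,
   [/\ wQ2 <= q2, wQ3 <= q3, pW <= p, s2W <= s2 & s3W <= s3] /\
   [/\ pW + s2W + a + z <= k,
   pW + s2W + l + wQ2 + z <= k + q2,
   pW + s3W + b + z <= k &
   pW + s3W + r + wQ3 + z <= k + q3] /\
   q2+q3+p+s2+s3 <= z + (wQ2+wQ3+pW+s2W+s3W) /\
   wQ2+wQ3+pW+s2W+s3W + z <= k.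
Proof.
move=> H1 H2 H3 H4 H5 H6 H7 H8 H9 H10 H11.
have [e2 El] : exists e2, l = a + e2 by exists (l - a); lia.
have [f2 Eq2] : exists f2, q2 = e2 + f2 by exists (q2 - e2); lia.
have [e3 Er] : exists e3, r = b + e3 by exists (r - b); lia.
have [f3 Eq3] : exists f3, q3 = e3 + f3 by exists (q3 - e3); lia.
have [c Ek] : exists c, k = z + c by exists (k - z); lia.
subst l q2 r q3 k.
case: (leqP (e2 + f2 + (e3 + f3) + p + s2 + s3) z) => HT.
  exists 0, 0, 0, 0, 0; split; [split|split;[split|split]]; lia.
have [N EN] : exists N, e2 + f2 + (e3 + f3) + p + s2 + s3 = z + N by exists (e2 + f2 + (e3 + f3) + p + s2 + s3 - z); lia.
have [LA' [HLA1 HLA2 HLA3]] : exists LA', [/\ LA' <= s2 + e2, LA' + a <= c & (LA' = s2 + e2 \/ LA' + a = c)].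
  case: (leqP (s2 + e2 + a) c) => h; [exists (s2+e2)|exists (c - a)]; split; lia.
have [RA' [HRA1 HRA2 HRA3]] : exists RA', [/\ RA' <= s3 + e3, RA' + b <= c & (RA' = s3 + e3 \/ RA' + b = c)].
  case: (leqP (s3 + e3 + b) c) => h; [exists (s3+e3)|exists (c - b)]; split; lia.
case: (leqP N (f2 + f3 + LA' + RA')) => HN.
- have [wf [ys [h1 h2 h3]]] : exists wf ys, [/\ wf <= f2 + f3, ys <= LA' + RA' & wf + ys = N] by apply: split2; lia.
  have [w2 [w3 [h4 h5 h6]]] : exists w2 w3, [/\ w2 <= f2, w3 <= f3 & w2 + w3 = wf] by apply: split2; lia.
  have [yL [yR [h7 h8 h9]]] : exists yL yR, [/\ yL <= LA', yR <= RA' & yL + yR = ys] by apply: split2; lia.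
  have [s2W [x2 [h10 h11 h12]]] : exists s2W x2, [/\ s2W <= s2, x2 <= e2 & s2W + x2 = yL] by apply: split2; lia.
  have [s3W [x3 [h13 h14 h15]]] : exists s3W x3, [/\ s3W <= s3, x3 <= e3 & s3W + x3 = yR] by apply: split2; lia.
  exists (w2 + x2), (w3 + x3), 0, s2W, s3W; split; [split|split;[split|split]]; lia.
- have hL : LA' = s2 + e2 by case: HLA3 => //; lia.
  have hR : RA' = s3 + e3 by case: HRA3 => //; lia.
  subst LA' RA'.
  exists (f2 + e2), (f3 + e3), (N - (f2 + f3 + (s2 + e2) + (s3 + e3))), s2, s3.
  split; [split|split;[split|split]]; lia.
Qed.

Section Band.
Variables (T : finType) (e : rel T).
Hypothesis esym : symmetric e.
Hypothesis eirr : irreflexive e.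
Variables (Q1 Q2 Q3 Q4 Q5 R2 R3 : {set T}).

Definition cpl (A B : {set T}) := forall x y, x \in A -> y \in B -> e x y.
Definition acpl (A B : {set T}) := forall x y, x \in A -> y \in B -> ~~ e x y.
Definition nested (P S : {set T}) := forall p p', p \in P -> p' \in P ->
  nb e S p \subset nb e S p' \/ nb e S p' \subset nb e S p.

Hypothesis cover : forall x, x \in Q1 :|: Q2 :|: Q3 :|: Q4 :|: Q5 :|: R2 :|: R3.
Hypothesis dis5 : forall x, x \in Q5 -> x \in Q2 :|: Q3 :|: R2 :|: R3 -> False.
Hypotheses (cQ1 : is_clique e Q1) (cQ2 : is_clique e Q2) (cQ3 : is_clique e Q3)
  (cQ4 : is_clique e Q4) (cQ5 : is_clique e Q5) (cR2 : is_clique e R2) (cR3 : is_clique e R3).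
Hypotheses (k51 : cpl Q5 Q1) (k54 : cpl Q5 Q4) (k21 : cpl R2 Q1) (k22 : cpl R2 Q2)
  (k23 : cpl R2 Q3) (k32 : cpl R3 Q2) (k33 : cpl R3 Q3) (k34 : cpl R3 Q4) (kQ23 : cpl Q2 Q3).
Hypotheses (a13 : acpl Q1 Q3) (a1r3 : acpl Q1 R3) (a14 : acpl Q1 Q4) (a42 : acpl Q4 Q2)
  (a4r2 : acpl Q4 R2) (a52 : acpl Q5 Q2) (a5r2 : acpl Q5 R2) (a53 : acpl Q5 Q3) (a5r3 : acpl Q5 R3).
Hypotheses (g12 : nested Q1 Q2) (g34 : nested Q3 Q4) (gR : nested R2 R3).

Lemma cpl_sym A B : cpl A B -> cpl B A.
Proof. by move=> h x y xB yA; rewrite esym; apply: h. Qed.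

Lemma clique_union (A B : {set T}) : is_clique e A -> is_clique e B -> cpl A B ->
  is_clique e (A :|: B).
Proof.
move=> /cliqueP cA /cliqueP cB hAB; apply/cliqueP => x y /setUP [xA|xB] /setUP [yA|yB] nxy.
- exact: cA.
- exact: hAB.
- by rewrite esym; apply: hAB.
- exact: cB.
Qed.

Lemma nested_flip P S : nested P S -> nested S P.
Proof.
move=> hn s s' sS s'S.
case: (boolP (nb e P s \subset nb e P s')) => [h|/subsetPn [p pIn pNot]]; first by left.
right; apply/subsetP => p' p'In; apply/negPn/negP => p'Not.
move: pIn pNot p'In p'Not; rewrite !inE.
case/andP => pP esp; rewrite pP /= => es'p.
case/andP => p'P es'p'; rewrite p'P /= => esp'.
case: (hn p p' pP p'P) => /subsetP h.
- have : s \in nb e S p' by apply: h; rewrite inE sS esym.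
  by rewrite inE esym (negbTE esp') andbF.
- have : s' \in nb e S p by apply: h; rewrite inE s'S esym.
  by rewrite inE esym (negbTE es'p) andbF.
Qed.

Lemma nested_le P S p p' : nested P S -> p \in P -> p' \in P ->
  #|nb e S p| <= #|nb e S p'| -> nb e S p \subset nb e S p'.
Proof.
move=> hn pP p'P hc; case: (hn p p' pP p'P) => // h.
suff /eqP -> : nb e S p' == nb e S p by [].
by rewrite eqEcard h hc.
Qed.

Lemma nested_min P S (A : {set T}) : nested P S -> A \subset P -> A != set0 ->
  exists2 v, v \in A & forall w, w \in A -> nb e S v \subset nb e S w.
Proof.
move=> hn /subsetP sAP /set0Pn [a aA].
case: (arg_minnP (fun v => #|nb e S v|) aA) => v vA hmin.
exists v => // w wA; apply: nested_le hn (sAP _ vA) (sAP _ wA) (hmin _ wA).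
Qed.

Lemma simp_gen (W P S X : {set T}) v : v \in P -> is_clique e P -> is_clique e S ->
  is_clique e X -> cpl X P -> cpl X S ->
  (forall w s, w \in P -> s \in S -> e v s -> e w s) ->
  (forall y, y \in W -> e v y -> [\/ y \in P, y \in S | y \in X]) ->
  is_clique e (v |: nb e W v).
Proof.
move=> vP /cliqueP cP /cliqueP cS /cliqueP cX hXP hXS hn hW.
have cls : forall y, y \in nb e W v -> e v y /\ [\/ y \in P, y \in S | y \in X].
  by move=> y; rewrite inE => /andP [yW evy]; split => //; apply: hW.
apply/cliqueP => x y /setU1P [->|xN] /setU1P [->|yN] nxy.
- by rewrite eqxx in nxy.
- by case: (cls y yN).
- by case: (cls x xN) => h _; rewrite esym.
- case: (cls x xN) => evx [xP|xS|xX]; case: (cls y yN) => evy [yP|yS|yX].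
  + exact: cP.
  + exact: hn.
  + by rewrite esym; apply: hXP.
  + by rewrite esym; apply: hn.
  + exact: cS.
  + by rewrite esym; apply: hXS.
  + exact: hXP.
  + exact: hXS.
  + exact: cX.
Qed.

Definition M := Q2 :|: Q3 :|: R2 :|: R3.

Lemma nbrQ4 v y : v \in Q4 -> y \notin Q5 -> e v y -> [\/ y \in Q4, y \in Q3 | y \in R3].
Proof.
move=> v4 y5 evy.
have n1 : y \notin Q1 by apply: contraL evy => h; rewrite esym a14.
have n2 : y \notin Q2 by apply: contraL evy => h; rewrite a42.
have nr2 : y \notin R2 by apply: contraL evy => h; rewrite a4r2.
case: (boolP (y \in Q4)) => h4; first by constructor 1.
case: (boolP (y \in Q3)) => h3; first by constructor 2.
case: (boolP (y \in R3)) => hr3; first by constructor 3.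
move: (cover y); rewrite !inE.
by rewrite (negbTE y5) (negbTE n1) (negbTE n2) (negbTE nr2) (negbTE h4) (negbTE h3) (negbTE hr3).
Qed.

Lemma nbrQ1 v y : v \in Q1 -> y \notin Q5 -> e v y -> [\/ y \in Q1, y \in Q2 | y \in R2].
Proof.
move=> v1 y5 evy.
have n3 : y \notin Q3 by apply: contraL evy => h; rewrite a13.
have n4 : y \notin Q4 by apply: contraL evy => h; rewrite a14.
have nr3 : y \notin R3 by apply: contraL evy => h; rewrite a1r3.
case: (boolP (y \in Q1)) => h1; first by constructor 1.
case: (boolP (y \in Q2)) => h2; first by constructor 2.
case: (boolP (y \in R2)) => hr2; first by constructor 3.
move: (cover y); rewrite !inE.
by rewrite (negbTE y5) (negbTE n3) (negbTE n4) (negbTE nr3) (negbTE h1) (negbTE h2) (negbTE hr2).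
Qed.

Lemma nbrM y : y \notin Q5 -> y \notin Q1 -> y \notin Q4 ->
  [\/ y \in Q2, y \in Q3, y \in R2 | y \in R3].
Proof.
move=> y5 y1 y4.
case: (boolP (y \in Q2)) => h2; first by constructor 1.
case: (boolP (y \in Q3)) => h3; first by constructor 2.
case: (boolP (y \in R2)) => hr2; first by constructor 3.
case: (boolP (y \in R3)) => hr3; first by constructor 4.
move: (cover y); rewrite !inE.
by rewrite (negbTE y5) (negbTE y1) (negbTE y4) (negbTE h2) (negbTE h3) (negbTE hr2) (negbTE hr3).
Qed.

Lemma cQ23 : is_clique e (Q2 :|: Q3).
Proof. exact: clique_union. Qed.

Lemma simplicial (W : {set T}) : W :&: Q5 = set0 -> W != set0 ->
  exists2 v, v \in W & is_clique e (v |: nb e W v).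
Proof.
move=> W5 W0.
have n5 : forall y, y \in W -> y \notin Q5.
  by move=> y yW; apply/negP => y5; move/setP: W5 => /(_ y); rewrite !inE yW y5.
have nbW : forall v y, y \in nb e W v -> y \in W /\ e v y.
  by move=> v y; rewrite inE => /andP.
case: (eqVneq (W :&: Q4) set0) => [W4|W4]; last first.
  have [v vW4 hv] := nested_min (nested_flip g34) (subsetIr W Q4) W4.
  move: (vW4); rewrite inE => /andP [vW v4].
  exists v => //.
  apply: (@simp_gen W (W :&: Q4) Q3 R3) => //.
  - exact: clique_sub (subsetIr _ _) cQ4.
  - by move=> x y xR yW4; apply: k34 => //; move: yW4; rewrite inE => /andP [].
  - by move=> w s wP sQ3 evs; have := subsetP (hv w wP) s; rewrite !inE sQ3 evs => /(_ isT).
  - move=> y yW evy; case: (nbrQ4 v4 (n5 _ yW) evy) => h.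
    + by constructor 1; rewrite inE yW h.
    + by constructor 2.
    + by constructor 3.
have n4 : forall y, y \in W -> y \notin Q4.
  by move=> y yW; apply/negP => y4; move/setP: W4 => /(_ y); rewrite !inE yW y4.
case: (eqVneq (W :&: Q1) set0) => [W1|W1]; last first.
  have [v vW1 hv] := nested_min g12 (subsetIr W Q1) W1.
  move: (vW1); rewrite inE => /andP [vW v1].
  exists v => //.
  apply: (@simp_gen W (W :&: Q1) Q2 R2) => //.
  - exact: clique_sub (subsetIr _ _) cQ1.
  - by move=> x y xR yW1; apply: k21 => //; move: yW1; rewrite inE => /andP [].
  - by move=> w s wP sQ evs; have := subsetP (hv w wP) s; rewrite !inE sQ evs => /(_ isT).
  - move=> y yW evy; case: (nbrQ1 v1 (n5 _ yW) evy) => h.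
    + by constructor 1; rewrite inE yW h.
    + by constructor 2.
    + by constructor 3.
have n1 : forall y, y \in W -> y \notin Q1.
  by move=> y yW; apply/negP => y1; move/setP: W1 => /(_ y); rewrite !inE yW y1.
case: (eqVneq (W :&: R3) set0) => [Wr3|Wr3]; last first.
  have [v vW3 hv] := nested_min (nested_flip gR) (subsetIr W R3) Wr3.
  move: (vW3); rewrite inE => /andP [vW v3].
  exists v => //.
  apply: (@simp_gen W (W :&: R3) R2 (Q2 :|: Q3)) => //.
  - exact: clique_sub (subsetIr _ _) cR3.
  - exact: cQ23.
  - move=> x y xQ yW3; move: yW3; rewrite inE => /andP [_ y3].
    by rewrite esym; case/setUP: xQ => h; [apply: k32|apply: k33].
  - move=> x y xQ yR; rewrite esym.
    by case/setUP: xQ => h; [apply: k22|apply: k23].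
  - by move=> w s wP sQ evs; have := subsetP (hv w wP) s; rewrite !inE sQ evs => /(_ isT).
  - move=> y yW evy; case: (nbrM (n5 _ yW) (n1 _ yW) (n4 _ yW)) => h.
    + by constructor 3; rewrite inE h.
    + by constructor 3; rewrite inE h orbT.
    + by constructor 2.
    + by constructor 1; rewrite inE yW h.
have nr3 : forall y, y \in W -> y \notin R3.
  by move=> y yW; apply/negP => y3; move/setP: Wr3 => /(_ y); rewrite !inE yW y3.
have [v vW] := set0Pn _ W0.
exists v => //.
apply: (clique_sub (B := Q2 :|: Q3 :|: R2)).
  apply/subsetP => y /setU1P [->|/nbW [yW _]]; [move: vW|move: yW] => {}yW;
  case: (nbrM (n5 _ yW) (n1 _ yW) (n4 _ yW)) => h; rewrite !inE ?h ?orbT //;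
  by rewrite (negbTE (nr3 _ yW)) in h.
apply: clique_union => //; first exact: cQ23.
by move=> x y xQ yR; rewrite esym; case/setUP: xQ => h; [apply: k22|apply: k23].
Qed.

Lemma perfect_noQ5 (U : {set T}) c : U :&: Q5 = set0 -> cbound e U c -> colorable_on e U c.
Proof.
move=> U5 hb; apply: degen => // W sWU W0.
have W5 : W :&: Q5 = set0.
  apply/eqP; rewrite -subset0 -U5; exact: setSI.
have [v vW hv] := simplicial W5 W0.
exists v => //.
have vN : v \notin nb e W v by rewrite inE eirr andbF.
have := hb _ _ hv; rewrite cardsU1 vN add1n; apply.
apply/subsetP => y /setU1P [->|]; first exact: (subsetP sWU).
by rewrite inE => /andP [yW _]; apply: (subsetP sWU).
Qed.

Definition cmax (S : {set T}) := \max_(A : {set T} | (A \subset S) && is_clique e A) #|A|.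

Lemma cmax_ub (S A : {set T}) : A \subset S -> is_clique e A -> #|A| <= cmax S.
Proof.
move=> sAS cA.
by apply: (@leq_bigmax_cond _ (fun A : {set T} => (A \subset S) && is_clique e A) (fun A => #|A|)); rewrite sAS cA.
Qed.

Lemma cmax_le (S : {set T}) m :
  (forall A : {set T}, A \subset S -> is_clique e A -> #|A| <= m) -> cmax S <= m.
Proof. by move=> H; apply/bigmax_leqP => A /andP [sA cA]; apply: H. Qed.

Lemma clique_w (A : {set T}) : is_clique e A -> #|A| <= clique_number e.
Proof.
move=> cA; rewrite /clique_number.
exact: (@leq_bigmax_cond _ (fun A : {set T} => is_clique e A) (fun A => #|A|)).
Qed.

Lemma cpl_disj A B : cpl A B -> A :&: B = set0.
Proof.
move=> h; apply/setP => x; rewrite !inE; apply/negP => /andP [xA xB].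
by move: (h x x xA xB); rewrite eirr.
Qed.

Lemma main_col : colorable_on e [set: T] ((5 * clique_number e + 3) %/ 4).
Proof.
set w := clique_number e.
set k := (5 * w + 3) %/ 4.
have hk1 : 5 * w <= 4 * k.
  have := divn_eq (5 * w + 3) 4; have := ltn_pmod (5 * w + 3) (isT : 0 < 4).
  rewrite -/k => H1 H2; clear -H1 H2; lia.
have hk2 : w <= k by clear -hk1; lia.
set z := #|Q5|. set a := #|Q1|. set b := #|Q4|. set q2 := #|Q2|. set q3 := #|Q3|.
have F1 : a + z <= w.
  have := clique_w (clique_union cQ5 cQ1 k51).
  by rewrite card_disjU ?(cpl_disj k51) // addnC.
have F2 : b + z <= w.
  have := clique_w (clique_union cQ5 cQ4 k54).
  by rewrite card_disjU ?(cpl_disj k54) // addnC.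
set l := cmax (Q1 :|: Q2).
set r := cmax (Q3 :|: Q4).
have al : a <= l by apply: cmax_ub => //; exact: subsetUl.
have br : b <= r by apply: cmax_ub => //; exact: subsetUr.
have la : l <= a + q2.
  by apply: cmax_le => A sA _; apply: card_sub_U.
have rb : r <= b + q3.
  by apply: cmax_le => A sA _; rewrite addnC; apply: card_sub_U.
have r2w : #|R2| <= w := clique_w cR2.
have r3w : #|R3| <= w := clique_w cR3.
have lR2 : l <= w - #|R2|.
  apply: cmax_le => A sA cA.
  have cpA : cpl R2 A.
    by move=> x y xR yA; case/setUP: (subsetP sA y yA) => h; [apply: k21|apply: k22].
  have := clique_w (clique_union cR2 cA cpA); rewrite card_disjU ?(cpl_disj cpA) // => H; clear -H; lia.
have rR3 : r <= w - #|R3|.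
  apply: cmax_le => A sA cA.
  have cpA : cpl R3 A.
    by move=> x y xR yA; case/setUP: (subsetP sA y yA) => h; [apply: k33|apply: k34].
  have := clique_w (clique_union cR3 cA cpA); rewrite card_disjU ?(cpl_disj cpA) // => H; clear -H; lia.
set R := R2 :|: R3.
set cR := cmax R.
have qw : q2 + q3 <= w.
  have := clique_w cQ23; rewrite card_disjU ?(cpl_disj kQ23) //.
have KR : cR <= w - (q2 + q3).
  apply: cmax_le => B sB cB.
  have cp : cpl (Q2 :|: Q3) B.
    move=> x y xK yB; rewrite esym.
    by case/setUP: (subsetP sB y yB) => yR; case/setUP: xK => xQ;
      [apply: k22|apply: k23|apply: k32|apply: k33].
  have := clique_w (clique_union cQ23 cB cp).
  rewrite card_disjU ?(cpl_disj cp) // card_disjU ?(cpl_disj kQ23) // => H; clear -H; lia.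
have R5 : R :&: Q5 = set0.
  apply/setP => x; rewrite !inE; apply/negP => /andP [xR x5]; apply: (dis5 x5).
  by case/orP: xR => h; rewrite !inE h ?orbT.
have [f [fb fp]] : colorable_on e R cR.
  by apply: perfect_noQ5 R5 _ => C sC cC; apply: cmax_ub.
pose h := fun x => (inord (f x) : 'I_cR.+1).
have hval : forall x, x \in R -> val (h x) = f x.
  by move=> x xR; rewrite /h /= inordK // ltnS ltnW // fb.
have hinj : forall C : {set T}, C \subset R -> is_clique e C -> {in C &, injective h}.
  move=> C sC /cliqueP cC x y xC yC hxy; apply/eqP; apply/negPn/negP => nxy.
  have := fp x y (subsetP sC x xC) (subsetP sC y yC) (cC x y xC yC nxy).
  by rewrite -(hval x) ?(subsetP sC) // -(hval y) ?(subsetP sC) // hxy eqxx.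
have himg : forall (C : {set T}) (Z : {set 'I_cR.+1}), C \subset R -> is_clique e C ->
    (forall y, y \in C -> h y \in Z) -> #|C| <= #|Z|.
  move=> C Z sC cC hZ; rewrite -(card_in_imset (hinj C sC cC)).
  by apply: subset_leq_card; apply/subsetP => i /imsetP [y yC ->]; apply: hZ.
set F2s := h @: R2. set F3s := h @: R3.
have sR2 : R2 \subset R by exact: subsetUl.
have sR3 : R3 \subset R by exact: subsetUr.
have cF2 : #|F2s| = #|R2| := card_in_imset (hinj R2 sR2 cR2).
have cF3 : #|F3s| = #|R3| := card_in_imset (hinj R3 sR3 cR3).
set Pc := F2s :&: F3s. set S2c := F2s :\: F3s. set S3c := F3s :\: F2s.
set p := #|Pc|. set s2 := #|S2c|. set s3 := #|S3c|.
have e1 : p + s2 = #|R2| by rewrite -cF2 /p /s2 /Pc /S2c cardsID.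
have e2 : p + s3 = #|R3| by rewrite -cF3 /p /s3 /Pc /S3c setIC cardsID.
have e3 : p + s2 + s3 <= cR.
  have : F2s :|: F3s \subset [set~ ord_max].
    apply/subsetP => i /setUP [] /imsetP [x xR ->]; rewrite !inE -val_eqE /=.
    - have xR' : x \in R := subsetP sR2 x xR.
      by rewrite hval // neq_ltn fb.
    - have xR' : x \in R := subsetP sR3 x xR.
      by rewrite hval // neq_ltn fb.
  move/subset_leq_card; rewrite cardsC1 card_ord /= cardsU -/Pc -/p cF2 cF3 => H1.
  clear -H1 e1 e2; lia.
have [wQ2 [wQ3 [pW [s2W [s3W [[b1 b2 b3 b4 b5] [[n1 n2 n3 n4] [n5 n6]]]]]]]] :=
  @numeric w k z a b q2 q3 l r p s2 s3 hk1 hk2 F1 F2 al la br rb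
    ltac:(clear -lR2 e1 r2w; lia) ltac:(clear -rR3 e2 r3w; lia) ltac:(clear -KR e3 qw; lia).

have [T2 [sT2 cT2 hT2]] := @top_set _ Q2 (fun v => #|nb e Q1 v|) (q2 - wQ2) (leq_subr _ _).
have [T3 [sT3 cT3 hT3]] := @top_set _ Q3 (fun v => #|nb e Q4 v|) (q3 - wQ3) (leq_subr _ _).
have [PY sPY cPY] := @sub_card _ Pc (p - pW) (leq_subr _ _).
have [S2Y sS2Y cS2Y] := @sub_card _ S2c (s2 - s2W) (leq_subr _ _).
have [S3Y sS3Y cS3Y] := @sub_card _ S3c (s3 - s3W) (leq_subr _ _).
pose J := PY :|: S2Y :|: S3Y.
pose RY := [set x in R | h x \in J].
pose Y := T2 :|: T3 :|: RY.
have T2Y : forall t, t \in T2 -> t \in Y by move=> t tT; rewrite /Y !inE tT.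
have T3Y : forall t, t \in T3 -> t \in Y by move=> t tT; rewrite /Y !inE tT orbT.
have RYY : forall x, x \in R -> h x \in J -> x \in Y.
  by move=> x xR xJ; rewrite /Y; apply/setUP; right; rewrite /RY inE xR xJ.
have YM : forall x, x \in Y -> x \in Q2 :|: Q3 :|: R2 :|: R3.
  move=> x; rewrite /Y => /setUP [/setUP [xT|xT]|].
  - by rewrite !inE (subsetP sT2 x xT).
  - by rewrite !inE (subsetP sT3 x xT) orbT.
  - rewrite /RY inE => /andP [xR _]; move: xR; rewrite /R !inE.
    by case/orP => ->; rewrite ?orbT.
have Y5 : Y :&: Q5 = set0.
  apply/setP => x; rewrite inE in_set0; apply/negP => /andP [xY x5].
  exact: dis5 x5 (YM x xY).
have cbY : cbound e Y z.
  move=> C sC cC.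
  have h1 : #|C :&: RY| <= #|J|.
    apply: himg.
    - by apply/subsetP => x; rewrite /RY !inE => /andP [_ /andP []].
    - exact: clique_sub (subsetIl _ _) cC.
    - by move=> y; rewrite /RY !inE => /andP [_ /andP [_ ->]].
  have h2 : #|J| <= #|PY| + #|S2Y| + #|S3Y|.
    apply: leq_trans (leq_card_setU _ _).1 _; rewrite leq_add2r; exact: (leq_card_setU _ _).1.
  have h3 : #|C| <= #|C :&: RY| + (#|T2| + #|T3|).
    apply: leq_trans (@card_sub_U _ C (C :&: RY) (T2 :|: T3) _) _.
      apply/subsetP => x xC; have := subsetP sC x xC; rewrite /Y !inE xC /=.
      by case/orP => [/orP [->|->]|->]; rewrite ?orbT.
    by rewrite leq_add2l; exact: (leq_card_setU _ _).1.
  rewrite cT2 cT3 cPY cS2Y cS3Y in h2 h3.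
  clear -h1 h2 h3 n5 b1 b2 b3 b4 b5; lia.
have colY : colorable_on e Y z := perfect_noQ5 Y5 cbY.
have antiQ5Y : anticomplete_to e Q5 Y.
  apply/anticompleteP => x y x5 yY.
  move: (YM y yY); rewrite !inE => /orP [/orP [/orP [hy|hy]|hy]|hy].
  - exact: a52.
  - exact: a53.
  - exact: a5r2.
  - exact: a5r3.
have colB : colorable_on e (Q5 :|: Y) z :=
  colorable_anti esym antiQ5Y (colorable_card eirr Q5) colY.
pose A := ~: (Q5 :|: Y).
have A5 : A :&: Q5 = set0.
  by apply/setP => x; rewrite /A !inE negb_or; case: (x \in Q5); rewrite ?andbF.
have cbA : cbound e A (k - z).
  move=> C sC cC.
  move/cliqueP: (cC) => cCP.
  have CY : forall x, x \in C -> x \notin Y.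
    by move=> x /(subsetP sC); rewrite /A !inE negb_or => /andP [].
  have C5 : forall x, x \in C -> x \notin Q5.
    by move=> x /(subsetP sC); rewrite /A !inE negb_or => /andP [].
  have CRY : forall x, x \in C -> x \in R -> h x \notin J.
    by move=> x xC xR; apply: contra (CY x xC); apply: RYY.
  have nPY : forall i, i \notin J -> i \notin PY.
    by move=> i; apply: contra => hi; rewrite /J !inE hi.
  have nS2Y : forall i, i \notin J -> i \notin S2Y.
    by move=> i; apply: contra => hi; rewrite /J !inE hi ?orbT.
  have nS3Y : forall i, i \notin J -> i \notin S3Y.
    by move=> i; apply: contra => hi; rewrite /J !inE hi ?orbT.
  have cPYd : #|Pc :\: PY| = pW.
    by rewrite cardD_sub // cPY; clear -b3; lia.
  have cS2d : #|S2c :\: S2Y| = s2W.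
    by rewrite cardD_sub // cS2Y; clear -b4; lia.
  have cS3d : #|S3c :\: S3Y| = s3W.
    by rewrite cardD_sub // cS3Y; clear -b5; lia.
  have hR2 : forall D : {set T}, D \subset C -> D \subset R2 -> #|D| <= pW + s2W.
    move=> D sDC sDR.
    have : #|D| <= #|(Pc :\: PY) :|: (S2c :\: S2Y)|.
      apply: himg; first exact: subset_trans sDR sR2.
        exact: clique_sub sDC cC.
      move=> y yD; have yC := subsetP sDC y yD; have yR2 := subsetP sDR y yD.
      have hF2 : h y \in F2s by apply: imset_f.
      have nJ := CRY y yC (subsetP sR2 y yR2).
      rewrite /Pc /S2c !inE hF2 (negbTE (nPY _ nJ)) (negbTE (nS2Y _ nJ)) /=.
      by case: (h y \in F3s).
    move=> H; apply: leq_trans H _; rewrite -cPYd -cS2d; exact: (leq_card_setU _ _).1.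
  have hR3 : forall D : {set T}, D \subset C -> D \subset R3 -> #|D| <= pW + s3W.
    move=> D sDC sDR.
    have : #|D| <= #|(Pc :\: PY) :|: (S3c :\: S3Y)|.
      apply: himg; first exact: subset_trans sDR sR3.
        exact: clique_sub sDC cC.
      move=> y yD; have yC := subsetP sDC y yD; have yR3 := subsetP sDR y yD.
      have hF3 : h y \in F3s by apply: imset_f.
      have nJ := CRY y yC (subsetP sR3 y yR3).
      rewrite /Pc /S3c !inE hF3 (negbTE (nPY _ nJ)) (negbTE (nS3Y _ nJ)) /= andbT.
      by case: (h y \in F2s).
    move=> H; apply: leq_trans H _; rewrite -cPYd -cS3d; exact: (leq_card_setU _ _).1.
  case: (boolP [exists x in C, x \in Q1]) => [/exists_inP [x xC x1] | nQ1].
    pose D := C :&: (Q1 :|: Q2).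
    have sub : C \subset D :|: (C :&: R2).
      apply/subsetP => y yC; rewrite !inE yC /=.
      case: (eqVneq x y) => [<-|xy]; first by rewrite x1.
      by case: (nbrQ1 x1 (C5 y yC) (cCP x y xC yC xy)) => ->; rewrite ?orbT.
    have hD : #|D| <= a \/ #|D| + (q2 - wQ2) <= l.
      case: (boolP [exists v in D, v \in Q2]) => [/exists_inP [v vD v2] | nD].
        right.
        have vC : v \in C by move: vD; rewrite inE => /andP [].
        have vT : v \notin T2 by apply: contra (CY v vC); apply: T2Y.
        have cp : cpl D T2.
          move=> d t dD tT.
          have dC : d \in C by move: dD; rewrite inE => /andP [].
          have t2 : t \in Q2 := subsetP sT2 t tT.
          have dt : d != t by apply: contraNneq (CY d dC) => ->; apply: T2Y.
          case: (boolP (d \in Q2)) => d2; first by move/cliqueP: cQ2; apply.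
          have d1 : d \in Q1 by move: dD; rewrite !inE (negbTE d2) orbF => /andP [].
          have vd : v != d by apply: contraNneq d2 => <-.
          have evd : e v d := cCP v d vC dC vd.
          have sb := nested_le (nested_flip g12) v2 t2 (hT2 t v tT v2 vT).
          have : d \in nb e Q1 t by apply: (subsetP sb); rewrite inE d1 evd.
          by rewrite inE esym => /andP [].
        have cDT : is_clique e (D :|: T2).
          exact: clique_union (clique_sub (subsetIl _ _) cC) (clique_sub sT2 cQ2) cp.
        have sDT : D :|: T2 \subset Q1 :|: Q2.
          rewrite subUset subsetIr /=; exact: subset_trans sT2 (subsetUr _ _).
        have := cmax_ub sDT cDT; rewrite -/l card_disjU ?cT2 //.
        apply/setP => y; rewrite !inE; apply/negP => /andP [/andP [yC _] yT].
        by move: (CY y yC); rewrite T2Y.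
      left; rewrite /a; apply: subset_leq_card; apply/subsetP => y yD.
      have : y \in Q1 :|: Q2 by move: yD; rewrite inE => /andP [].
      case/setUP => // y2; move/exists_inP: nD => nD; exfalso; apply: nD; by exists y.
    have hC : #|C| <= #|D| + #|C :&: R2| := card_sub_U sub.
    have hr := hR2 (C :&: R2) (subsetIl _ _) (subsetIr _ _).
    case: hD => hD; clear -hC hr hD n1 n2 b1 hk2 F1; lia.
  case: (boolP [exists x in C, x \in Q4]) => [/exists_inP [x xC x4] | nQ4].
    pose D := C :&: (Q3 :|: Q4).
    have sub : C \subset D :|: (C :&: R3).
      apply/subsetP => y yC; rewrite !inE yC /=.
      case: (eqVneq x y) => [<-|xy]; first by rewrite x4 orbT.
      by case: (nbrQ4 x4 (C5 y yC) (cCP x y xC yC xy)) => ->; rewrite ?orbT.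
    have hD : #|D| <= b \/ #|D| + (q3 - wQ3) <= r.
      case: (boolP [exists v in D, v \in Q3]) => [/exists_inP [v vD v3] | nD].
        right.
        have vC : v \in C by move: vD; rewrite inE => /andP [].
        have vT : v \notin T3 by apply: contra (CY v vC); apply: T3Y.
        have cp : cpl D T3.
          move=> d t dD tT.
          have dC : d \in C by move: dD; rewrite inE => /andP [].
          have t3 : t \in Q3 := subsetP sT3 t tT.
          have dt : d != t by apply: contraNneq (CY d dC) => ->; apply: T3Y.
          case: (boolP (d \in Q3)) => d3; first by move/cliqueP: cQ3; apply.
          have d4 : d \in Q4 by move: dD; rewrite !inE (negbTE d3) /= => /andP [].
          have vd : v != d by apply: contraNneq d3 => <-.
          have evd : e v d := cCP v d vC dC vd.
          have sb := nested_le g34 v3 t3 (hT3 t v tT v3 vT).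
          have : d \in nb e Q4 t by apply: (subsetP sb); rewrite inE d4 evd.
          by rewrite inE esym => /andP [].
        have cDT : is_clique e (D :|: T3).
          exact: clique_union (clique_sub (subsetIl _ _) cC) (clique_sub sT3 cQ3) cp.
        have sDT : D :|: T3 \subset Q3 :|: Q4.
          rewrite subUset subsetIr /=; exact: subset_trans sT3 (subsetUl _ _).
        have := cmax_ub sDT cDT; rewrite -/r card_disjU ?cT3 //.
        apply/setP => y; rewrite !inE; apply/negP => /andP [/andP [yC _] yT].
        by move: (CY y yC); rewrite T3Y.
      left; rewrite /b; apply: subset_leq_card; apply/subsetP => y yD.
      have : y \in Q3 :|: Q4 by move: yD; rewrite inE => /andP [].
      case/setUP => // y3; move/exists_inP: nD => nD; exfalso; apply: nD; by exists y.
    have hC : #|C| <= #|D| + #|C :&: R3| := card_sub_U sub.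
    have hr := hR3 (C :&: R3) (subsetIl _ _) (subsetIr _ _).
    case: hD => hD; clear -hC hr hD n3 n4 b2 hk2 F2; lia.
  have nC1 : forall y, y \in C -> y \notin Q1.
    by move=> y yC; apply/negP => y1; move/exists_inP: nQ1; apply; exists y.
  have nC4 : forall y, y \in C -> y \notin Q4.
    by move=> y yC; apply/negP => y4; move/exists_inP: nQ4; apply; exists y.
  have sub : C \subset (C :&: Q2) :|: (C :&: Q3) :|: (C :&: R).
    apply/subsetP => y yC; rewrite /R !inE yC /=.
    by case: (nbrM (C5 y yC) (nC1 y yC) (nC4 y yC)) => ->; rewrite ?orbT.
  have hC : #|C| <= #|C :&: Q2| + #|C :&: Q3| + #|C :&: R|.
    apply: leq_trans (card_sub_U sub) _; rewrite leq_add2r; exact: (leq_card_setU _ _).1.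
  have hQ2 : #|C :&: Q2| <= wQ2.
    have : C :&: Q2 \subset Q2 :\: T2.
      apply/subsetP => y; rewrite !inE => /andP [yC ->]; rewrite andbT.
      by apply: contra (CY y yC); apply: T2Y.
    move/subset_leq_card; rewrite cardD_sub // cT2 => H; clear -H b1; lia.
  have hQ3 : #|C :&: Q3| <= wQ3.
    have : C :&: Q3 \subset Q3 :\: T3.
      apply/subsetP => y; rewrite !inE => /andP [yC ->]; rewrite andbT.
      by apply: contra (CY y yC); apply: T3Y.
    move/subset_leq_card; rewrite cardD_sub // cT3 => H; clear -H b2; lia.
  have hRR : #|C :&: R| <= pW + s2W + s3W.
    have : #|C :&: R| <= #|(Pc :\: PY) :|: (S2c :\: S2Y) :|: (S3c :\: S3Y)|.
      apply: himg; first exact: subsetIr.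
        exact: clique_sub (subsetIl _ _) cC.
      move=> y; rewrite inE => /andP [yC yR].
      have nJ := CRY y yC yR.
      rewrite /Pc /S2c /S3c !inE (negbTE (nPY _ nJ)) (negbTE (nS2Y _ nJ)) (negbTE (nS3Y _ nJ)) /=.
      have : (h y \in F2s) || (h y \in F3s).
        move: yR; rewrite /R inE => /orP [yr|yr]; apply/orP; [left|right]; exact: imset_f.
      by case: (h y \in F2s); case: (h y \in F3s).
    move=> H; apply: leq_trans H _; rewrite -cPYd -cS2d -cS3d.
    apply: leq_trans (leq_card_setU _ _).1 _; rewrite leq_add2r; exact: (leq_card_setU _ _).1.
  clear -hC hQ2 hQ3 hRR n6 hk2 F1; lia.
have colA := perfect_noQ5 A5 cbA.
have := colorable_sum colA colB.
rewrite /A setUC setUCr subnK //; clear -hk2 F1; lia.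
Qed.

End Band.

Lemma nb_nbhd (T : finType) (e : rel T) (S : {set T}) p : nb e S p = nbhd e p :&: S.
Proof. by apply/setP => y; rewrite !inE andbC. Qed.

Lemma graded_nested (T : finType) (e : rel T) (P S : {set T}) : graded_pair e P S -> nested e P S.
Proof. by move=> [_ H] p p' pP p'P; rewrite !nb_nbhd; apply: H. Qed.

Theorem theorem5p13 (T : finType) (e : rel T)
  (Q1 Q2 Q3 Q4 Q5 R2 R3 : {set T}) :
  simple_graph e ->
  band e Q1 Q2 Q3 Q4 Q5 R2 R3 ->
  chromatic_number e <= (5 * clique_number e + 3) %/ 4.
Proof.
move=> [esym eirr] [[Hdis Hcov] [[cQ1 cQ2 cQ3 cQ4 cQ5] [[cR2 cR3] [[k5 kr2 kr3 kq] [[a1 a4 a5] [g12 g34 gR]]]]]].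
have cover : forall x, x \in Q1 :|: Q2 :|: Q3 :|: Q4 :|: Q5 :|: R2 :|: R3.
  by move=> x; rewrite Hcov inE.
have d52 : [disjoint Q5 & Q2] := Hdis 4 1 isT isT isT.
have d53 : [disjoint Q5 & Q3] := Hdis 4 2 isT isT isT.
have d5r2 : [disjoint Q5 & R2] := Hdis 4 5 isT isT isT.
have d5r3 : [disjoint Q5 & R3] := Hdis 4 6 isT isT isT.
have dis5 : forall x, x \in Q5 -> x \in Q2 :|: Q3 :|: R2 :|: R3 -> False.
  move=> x x5; rewrite !inE (disjointFr d52 x5) (disjointFr d53 x5).
  by rewrite (disjointFr d5r2 x5) (disjointFr d5r3 x5).
move/completeP: k5 => k5; move/completeP: kr2 => kr2; move/completeP: kr3 => kr3.
move/completeP: kq => kq.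
move/anticompleteP: a1 => a1; move/anticompleteP: a4 => a4; move/anticompleteP: a5 => a5.
have [f [fb fp]] := @main_col T e esym eirr Q1 Q2 Q3 Q4 Q5 R2 R3 cover dis5
  cQ1 cQ2 cQ3 cQ4 cQ5 cR2 cR3
  (fun x y xa yb => k5 x y xa ltac:(by rewrite inE yb))
  (fun x y xa yb => k5 x y xa ltac:(by rewrite inE yb orbT))
  (fun x y xa yb => kr2 x y xa ltac:(by rewrite !inE yb))
  (fun x y xa yb => kr2 x y xa ltac:(by rewrite !inE yb ?orbT))
  (fun x y xa yb => kr2 x y xa ltac:(by rewrite !inE yb ?orbT))
  (fun x y xa yb => kr3 x y xa ltac:(by rewrite !inE yb))
  (fun x y xa yb => kr3 x y xa ltac:(by rewrite !inE yb ?orbT))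
  (fun x y xa yb => kr3 x y xa ltac:(by rewrite !inE yb ?orbT))
  kq
  (fun x y xa yb => a1 x y xa ltac:(by rewrite !inE yb))
  (fun x y xa yb => a1 x y xa ltac:(by rewrite !inE yb ?orbT))
  (fun x y xa yb => a1 x y xa ltac:(by rewrite !inE yb ?orbT))
  (fun x y xa yb => a4 x y xa ltac:(by rewrite !inE yb ?orbT))
  (fun x y xa yb => a4 x y xa ltac:(by rewrite !inE yb ?orbT))
  (fun x y xa yb => a5 x y xa ltac:(by rewrite !inE yb))
  (fun x y xa yb => a5 x y xa ltac:(by rewrite !inE yb ?orbT))
  (fun x y xa yb => a5 x y xa ltac:(by rewrite !inE yb ?orbT))
  (fun x y xa yb => a5 x y xa ltac:(by rewrite !inE yb ?orbT))
  (graded_nested g12) (graded_nested g34) (graded_nested gR).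
rewrite /chromatic_number; case: ex_minnP => m _ hmin; apply: hmin.
apply/existsP; exists [ffun x => Ordinal (fb x (in_setT x))].
apply/forallP => x; apply/forallP => y; apply/implyP => /andP [_ exy].
by rewrite !ffunE -val_eqE /=; apply: fp; rewrite ?in_setT.
Qed.
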